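(* Let $\varphi=\nu\tilde n.\sigma$ be a frame that is well-formed with respect to a name $\mathtt{s}$, where $\mathtt{s}\in\tilde n$ is a restricted name of $\varphi$. Then $\varphi\nvdash \mathtt{s}$ if and only if $\varphi[\mathtt{s}/M]\approx \varphi[\mathtt{s}/M']$ for all closed terms $M,M'$ that are public with respect to $\varphi$.
   Context: Terms are built over the signature $\Sigma$ consisting of $\mathsf{enc}$ (arity 3), $\mathsf{dec}$ (2), $\mathsf{enca}$ (3), $\mathsf{deca}$ (2), $\mathsf{pub}$ (1), $\mathsf{priv}$ (1), pairing $\langle\cdot,\cdot\rangle$ (2), $\pi_1,\pi_2$ (1), $\mathsf{sign}$ (2), $\mathsf{check}$ (3), $\mathsf{retrieve}$ (1), together with a set of constants (including $\mathsf{ok}$), an infinite set $\mathcal N$ of names and an infinite set $\mathcal X$ of variables. Constructors are $\langle\rangle,\mathsf{enc},\mathsf{enca},\mathsf{sign}$; destructors are $\pi_1,\pi_2,\mathsf{dec},\mathsf{deca},\mathsf{check},\mathsf{retrieve}$. $\mathrm{fn}(T)$ is the set of names of $T$; a term is closed (ground) if it has no variables. Positions are finite sequences of positive integers ($\epsilon$ the root), $T|_p$ is the subterm at $p$. The equational theory $E$ is generated by $\pi_1(\langle z_1,z_2\rangle)=z_1$, $\pi_2(\langle z_1,z_2\rangle)=z_2$, $\mathsf{dec}(\mathsf{enc}(z_1,z_2,z_3),z_2)=z_1$, $\mathsf{deca}(\mathsf{enca}(z_1,\mathsf{pub}(z_2),z_3),\mathsf{priv}(z_2))=z_1$, $\mathsf{check}(z_1,\mathsf{sign}(z_1,\mathsf{priv}(z_2)),\mathsf{pub}(z_2))=\mathsf{ok}$,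 $\mathsf{retrieve}(\mathsf{sign}(z_1,z_2))=z_1$; $=_E$ is the induced equality. A frame $\varphi=\nu\tilde n.\sigma$ consists of a finite set $\tilde n$ of (restricted) names and an acyclic substitution $\sigma=\{y_1\mapsto M_1,\dots,y_l\mapsto M_l\}$; $\mathrm{dom}(\varphi)=\{y_1,\dots,y_l\}$, $\mathrm{ran}(\sigma)=\{M_1,\dots,M_l\}$. A term is public w.r.t. $\varphi$ (or w.r.t. $\tilde n$) if it contains no name of $\tilde n$ and no symbol $\mathsf{priv}$. Deducibility $\varphi\vdash M$ is the smallest relation such that $\varphi\vdash x\sigma$ for $x\in\mathrm{dom}(\sigma)$, $\varphi\vdash m$ for every name $m\notin\tilde n$, if $\varphi\vdash T_1,\dots,\varphi\vdash T_k$ then $\varphi\vdash f(T_1,\dots,T_k)$ for every $f\neq\mathsf{priv}$ of arity $k$, and if $\varphi\vdash T$ and $T=_E T'$ then $\varphi\vdash T'$. For $\mathtt{s}\in\tilde n$ and $M$ with $\mathrm{fn}(M)\cap\tilde n=\emptyset$, $\varphi[\mathtt{s}/M]=\nu\tilde n.\sigma[\mathtt{s}/M]$ replaces every occurrence of $\mathtt{s}$ in the terms of $\sigma$ by $M$. A frame $\nu\tilde n.\sigma$ passes the test $(U,V)$ if, after renaming the names of $\tilde n$ so that none occurs in $U$ or $V$, $U\sigma=_E V\sigma$. Two frames $\varphi,\varphi'$ are statically equivalent, $\varphi\approx\varphi'$, if $\mathrm{dom}(\varphi)=\mathrm{dom}(\varphi')$ and for all terms $U,V$ public w.r.t. both frames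 with variables in $\mathrm{dom}(\varphi)$, $\varphi$ passes $(U,V)$ iff $\varphi'$ passes $(U,V)$. An encryption (occurrence) in a term $U$ is a position $q$ with head symbol of $U|_q$ in $\{\mathsf{enc},\mathsf{enca}\}$. It is an agent encryption w.r.t. a set of names $\tilde m$ if $U|_{q\cdot 3}\in\tilde m$. It is a probabilistic encryption w.r.t. a set of terms $S$ if for every $V\in S$ and position $p$ with $V|_p=U|_{q\cdot 3}$ we have $p=q'\cdot 3$ for some $q'$ with $V|_{q'}=U|_q$. A frame $\varphi=\nu\tilde n.\sigma$ is well-formed w.r.t. a name $\mathtt{s}$ if: (1) every encryption occurring in the terms of $\sigma$ is an agent encryption w.r.t. $\tilde n\setminus\{\mathtt{s}\}$ and a probabilistic encryption w.r.t. $\mathrm{ran}(\sigma)$; (2) for all subterms $\mathsf{enc}(M,K,R)$, $\mathsf{enca}(M',K',R')$, $\mathsf{sign}(U,V)$, $\mathsf{pub}(W)$, $\mathsf{priv}(W')$ of terms of $\varphi$, $\mathtt{s}\notin\mathrm{fn}(K,K',V,W,W',R,R')$; (3) $\varphi$ contains no destructor symbol. *)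

(* Defs.v *)
From Stdlib Require Import List Arith Relations.
Import ListNotations.

Inductive term : Type :=
| Var (x : nat)
| Name (n : nat)
| Cst (c : nat)
| Enc (t1 t2 t3 : term)
| Dec (t1 t2 : term)
| Enca (t1 t2 t3 : term)
| Deca (t1 t2 : term)
| Pub (t : term)
| Priv (t : term)
| Pair (t1 t2 : term)
| Proj1 (t : term)
| Proj2 (t : term)
| Sign (t1 t2 : term)
| Check (t1 t2 t3 : term)
| Retrieve (t : term).

Definition ok : term := Cst 0.

(** Arguments of the root symbol, in order (positions 1..k). *)
Definition args (t : term) : list term :=
  match t with
  | Var _ | Name _ | Cst _ => []
  | Enc a b c | Enca a b c | Check a b c => [a; b; c]
  | Dec a b | Deca a b | Pair a b | Sign a b => [a; b]
  | Pub a | Priv a | Proj1 a | Proj2 a | Retrieve a => [a]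
  end.

Fixpoint subterm_at (t : term) (p : list nat) : option term :=
  match p with
  | [] => Some t
  | i :: p' =>
      match i with
      | 0 => None
      | S j => match nth_error (args t) j with
               | Some u => subterm_at u p'
               | None => None
               end
      end
  end.

Definition is_subterm (u t : term) : Prop := exists p, subterm_at t p = Some u.

Fixpoint names (t : term) : list nat :=
  match t with
  | Var _ | Cst _ => []
  | Name n => [n]
  | Enc a b c | Enca a b c | Check a b c => names a ++ names b ++ names c
  | Dec a b | Deca a b | Pair a b | Sign a b => names a ++ names b
  | Pub a | Priv a | Proj1 a | Proj2 a | Retrieve a => names a
  end.

Fixpoint vars (t : term) : list nat :=
  match t with
  | Name _ | Cst _ => []
  | Var x => [x]
  | Enc a b c | Enca a b c | Check a b c => vars a ++ vars b ++ vars c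
  | Dec a b | Deca a b | Pair a b | Sign a b => vars a ++ vars b
  | Pub a | Priv a | Proj1 a | Proj2 a | Retrieve a => vars a
  end.

Fixpoint has_priv (t : term) : bool :=
  match t with
  | Var _ | Name _ | Cst _ => false
  | Priv _ => true
  | Enc a b c | Enca a b c | Check a b c => has_priv a || has_priv b || has_priv c
  | Dec a b | Deca a b | Pair a b | Sign a b => has_priv a || has_priv b
  | Pub a | Proj1 a | Proj2 a | Retrieve a => has_priv a
  end.

Definition closed (t : term) : Prop := vars t = [].

Definition public_wrt (nt : list nat) (t : term) : Prop :=
  (forall n, In n (names t) -> ~ In n nt) /\ has_priv t = false.

Definition is_destructor (t : term) : Prop :=
  match t with
  | Proj1 _ | Proj2 _ | Dec _ _ | Deca _ _ | Check _ _ _ | Retrieve _ => True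
  | _ => False
  end.

Inductive eqE : term -> term -> Prop :=
| eqE_refl t : eqE t t
| eqE_sym t u : eqE t u -> eqE u t
| eqE_trans t u v : eqE t u -> eqE u v -> eqE t v
| eqE_Enc a b c a' b' c' : eqE a a' -> eqE b b' -> eqE c c' -> eqE (Enc a b c) (Enc a' b' c')
| eqE_Dec a b a' b' : eqE a a' -> eqE b b' -> eqE (Dec a b) (Dec a' b')
| eqE_Enca a b c a' b' c' : eqE a a' -> eqE b b' -> eqE c c' -> eqE (Enca a b c) (Enca a' b' c')
| eqE_Deca a b a' b' : eqE a a' -> eqE b b' -> eqE (Deca a b) (Deca a' b')
| eqE_Pub a a' : eqE a a' -> eqE (Pub a) (Pub a')
| eqE_Priv a a' : eqE a a' -> eqE (Priv a) (Priv a')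
| eqE_Pair a b a' b' : eqE a a' -> eqE b b' -> eqE (Pair a b) (Pair a' b')
| eqE_Proj1 a a' : eqE a a' -> eqE (Proj1 a) (Proj1 a')
| eqE_Proj2 a a' : eqE a a' -> eqE (Proj2 a) (Proj2 a')
| eqE_Sign a b a' b' : eqE a a' -> eqE b b' -> eqE (Sign a b) (Sign a' b')
| eqE_Check a b c a' b' c' : eqE a a' -> eqE b b' -> eqE c c' -> eqE (Check a b c) (Check a' b' c')
| eqE_Retrieve a a' : eqE a a' -> eqE (Retrieve a) (Retrieve a')
| eqE_ax_proj1 z1 z2 : eqE (Proj1 (Pair z1 z2)) z1
| eqE_ax_proj2 z1 z2 : eqE (Proj2 (Pair z1 z2)) z2
| eqE_ax_dec z1 z2 z3 : eqE (Dec (Enc z1 z2 z3) z2) z1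
| eqE_ax_deca z1 z2 z3 : eqE (Deca (Enca z1 (Pub z2) z3) (Priv z2)) z1
| eqE_ax_check z1 z2 : eqE (Check z1 (Sign z1 (Priv z2)) (Pub z2)) ok
| eqE_ax_retrieve z1 z2 : eqE (Retrieve (Sign z1 z2)) z1.

Definition subst := list (nat * term).

Definition dom (s : subst) : list nat := map fst s.
Definition ran (s : subst) : list term := map snd s.

Fixpoint lookup (s : subst) (x : nat) : option term :=
  match s with
  | [] => None
  | (y, t) :: s' => if Nat.eqb x y then Some t else lookup s' x
  end.

Fixpoint subst1 (s : subst) (t : term) : term :=
  match t with
  | Var x => match lookup s x with Some u => u | None => Var x end
  | Name n => Name n
  | Cst c => Cst c
  | Enc a b c => Enc (subst1 s a) (subst1 s b) (subst1 s c)
  | Dec a b => Dec (subst1 s a) (subst1 s b)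
  | Enca a b c => Enca (subst1 s a) (subst1 s b) (subst1 s c)
  | Deca a b => Deca (subst1 s a) (subst1 s b)
  | Pub a => Pub (subst1 s a)
  | Priv a => Priv (subst1 s a)
  | Pair a b => Pair (subst1 s a) (subst1 s b)
  | Proj1 a => Proj1 (subst1 s a)
  | Proj2 a => Proj2 (subst1 s a)
  | Sign a b => Sign (subst1 s a) (subst1 s b)
  | Check a b c => Check (subst1 s a) (subst1 s b) (subst1 s c)
  | Retrieve a => Retrieve (subst1 s a)
  end.

Definition dep (s : subst) (y x : nat) : Prop :=
  In y (dom s) /\ exists t, lookup s x = Some t /\ In y (vars t).

Definition acyclic (s : subst) : Prop := forall x, ~ clos_trans nat (dep s) x x.

(** Application of an acyclic substitution (fully resolved): iterating
    |dom s| times reaches the fixpoint for acyclic s. *)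
Definition apply_subst (s : subst) (t : term) : term :=
  Nat.iter (length s) (subst1 s) t.

Record frame := Frame { fnames : list nat; fsubst : subst }.

Definition frame_ok (phi : frame) : Prop :=
  NoDup (dom (fsubst phi)) /\ acyclic (fsubst phi).

Definition fdom (phi : frame) : list nat := dom (fsubst phi).

Definition public (phi : frame) (t : term) : Prop := public_wrt (fnames phi) t.

Inductive deducible (phi : frame) : term -> Prop :=
| ded_var x : In x (fdom phi) -> deducible phi (apply_subst (fsubst phi) (Var x))
| ded_name m : ~ In m (fnames phi) -> deducible phi (Name m)
| ded_cst c : deducible phi (Cst c)
| ded_Enc a b c : deducible phi a -> deducible phi b -> deducible phi c -> deducible phi (Enc a b c)
| ded_Dec a b : deducible phi a -> deducible phi b -> deducible phi (Dec a b)
| ded_Enca a b c : deducible phi a -> deducible phi b -> deducible phi c -> deducible phi (Enca a b c)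
| ded_Deca a b : deducible phi a -> deducible phi b -> deducible phi (Deca a b)
| ded_Pub a : deducible phi a -> deducible phi (Pub a)
| ded_Pair a b : deducible phi a -> deducible phi b -> deducible phi (Pair a b)
| ded_Proj1 a : deducible phi a -> deducible phi (Proj1 a)
| ded_Proj2 a : deducible phi a -> deducible phi (Proj2 a)
| ded_Sign a b : deducible phi a -> deducible phi b -> deducible phi (Sign a b)
| ded_Check a b c : deducible phi a -> deducible phi b -> deducible phi c -> deducible phi (Check a b c)
| ded_Retrieve a : deducible phi a -> deducible phi (Retrieve a)
| ded_eq t t' : deducible phi t -> eqE t t' -> deducible phi t'.

Fixpoint repl (s : nat) (M t : term) : term :=
  match t with
  | Var x => Var x
  | Name n => if Nat.eqb n s then M else Name n
  | Cst c => Cst c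
  | Enc a b c => Enc (repl s M a) (repl s M b) (repl s M c)
  | Dec a b => Dec (repl s M a) (repl s M b)
  | Enca a b c => Enca (repl s M a) (repl s M b) (repl s M c)
  | Deca a b => Deca (repl s M a) (repl s M b)
  | Pub a => Pub (repl s M a)
  | Priv a => Priv (repl s M a)
  | Pair a b => Pair (repl s M a) (repl s M b)
  | Proj1 a => Proj1 (repl s M a)
  | Proj2 a => Proj2 (repl s M a)
  | Sign a b => Sign (repl s M a) (repl s M b)
  | Check a b c => Check (repl s M a) (repl s M b) (repl s M c)
  | Retrieve a => Retrieve (repl s M a)
  end.

Definition frame_repl (phi : frame) (s : nat) (M : term) : frame :=
  Frame (fnames phi) (map (fun p => (fst p, repl s M (snd p))) (fsubst phi)).

(* The test (U,V) is only ever applied to terms public w.r.t. the frame, which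
   contain no restricted name, so the renaming of restricted names is vacuous. *)
Definition passes (phi : frame) (U V : term) : Prop :=
  eqE (apply_subst (fsubst phi) U) (apply_subst (fsubst phi) V).

Definition stat_equiv (phi phi' : frame) : Prop :=
  (forall x, In x (fdom phi) <-> In x (fdom phi')) /\
  forall U V,
    public phi U -> public phi' U -> public phi V -> public phi' V ->
    (forall x, In x (vars U) -> In x (fdom phi)) ->
    (forall x, In x (vars V) -> In x (fdom phi)) ->
    (passes phi U V <-> passes phi' U V).

Definition is_encryption (t : term) : Prop :=
  match t with Enc _ _ _ | Enca _ _ _ => True | _ => False end.

Definition agent_encryption (mt : list nat) (U : term) (q : list nat) : Prop :=
  exists r, subterm_at U (q ++ [3]) = Some (Name r) /\ In r mt.

Definition probabilistic_encryption (S : list term) (U : term) (q : list nat) : Prop :=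
  forall R E, subterm_at U (q ++ [3]) = Some R -> subterm_at U q = Some E ->
  forall V p, In V S -> subterm_at V p = Some R ->
  exists q', p = q' ++ [3] /\ subterm_at V q' = Some E.

Definition key_condition (s : nat) (t : term) : Prop :=
  match t with
  | Enc _ k r | Enca _ k r => ~ In s (names k) /\ ~ In s (names r)
  | Sign _ v => ~ In s (names v)
  | Pub w | Priv w => ~ In s (names w)
  | _ => True
  end.

Definition well_formed (phi : frame) (s : nat) : Prop :=
  (forall U q E, In U (ran (fsubst phi)) -> subterm_at U q = Some E -> is_encryption E ->
     agent_encryption (remove Nat.eq_dec s (fnames phi)) U q /\
     probabilistic_encryption (ran (fsubst phi)) U q) /\
  (forall U u, In U (ran (fsubst phi)) -> is_subterm u U -> key_condition s u) /\
  (forall U u, In U (ran (fsubst phi)) -> is_subterm u U -> ~ is_destructor u).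

(* Main.v *)
Require Import Defs.
From Stdlib Require Import List Arith Lia Relations.
Import ListNotations.

Definition teq (x y : term) : {x = y} + {x <> y}.
Proof. decide equality; apply Nat.eq_dec. Defined.

Definition sproj1 t := match t with Pair a _ => a | _ => Proj1 t end.
Definition sproj2 t := match t with Pair _ b => b | _ => Proj2 t end.
Definition sretr t := match t with Sign a _ => a | _ => Retrieve t end.
Definition sdec t k := match t with
  | Enc a b _ => if teq b k then a else Dec t k | _ => Dec t k end.
Definition sdeca t k := match t, k with
  | Enca a (Pub z) _, Priv z' => if teq z z' then a else Deca t k
  | _, _ => Deca t k end.
Definition scheck a b c := match b, c with
  | Sign a' (Priv z), Pub z' => if teq a a' then if teq z z' then ok else Check a b c else Check a b c
  | _, _ => Check a b c end.

Fixpoint norm (t : term) : term :=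
  match t with
  | Var x => Var x | Name n => Name n | Cst c => Cst c
  | Enc a b c => Enc (norm a) (norm b) (norm c)
  | Dec a b => sdec (norm a) (norm b)
  | Enca a b c => Enca (norm a) (norm b) (norm c)
  | Deca a b => sdeca (norm a) (norm b)
  | Pub a => Pub (norm a) | Priv a => Priv (norm a)
  | Pair a b => Pair (norm a) (norm b)
  | Proj1 a => sproj1 (norm a) | Proj2 a => sproj2 (norm a)
  | Sign a b => Sign (norm a) (norm b)
  | Check a b c => scheck (norm a) (norm b) (norm c)
  | Retrieve a => sretr (norm a)
  end.

Lemma eqE_norm t u : eqE t u -> norm t = norm u.
Proof.
  induction 1; simpl; try congruence.
  - destruct (teq (norm z2) (norm z2)); congruence.
  - destruct (teq (norm z2) (norm z2)); congruence.
  - destruct (teq (norm z1) (norm z1)); [|congruence].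
    destruct (teq (norm z2) (norm z2)); unfold ok in *; congruence.
Qed.

Lemma sdec_eqE a b : eqE (Dec a b) (sdec a b).
Proof. destruct a; try apply eqE_refl. simpl. destruct (teq a2 b); subst; [apply eqE_ax_dec|apply eqE_refl]. Qed.
Lemma sdeca_eqE a b : eqE (Deca a b) (sdeca a b).
Proof. destruct a; try apply eqE_refl. destruct a2; try apply eqE_refl; destruct b; try apply eqE_refl.
  simpl. destruct (teq a2 b); subst; [apply eqE_ax_deca|apply eqE_refl]. Qed.
Lemma sproj1_eqE a : eqE (Proj1 a) (sproj1 a).
Proof. destruct a; try apply eqE_refl. apply eqE_ax_proj1. Qed.
Lemma sproj2_eqE a : eqE (Proj2 a) (sproj2 a).
Proof. destruct a; try apply eqE_refl. apply eqE_ax_proj2. Qed.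
Lemma sretr_eqE a : eqE (Retrieve a) (sretr a).
Proof. destruct a; try apply eqE_refl. apply eqE_ax_retrieve. Qed.
Lemma scheck_eqE a b c : eqE (Check a b c) (scheck a b c).
Proof. destruct b; try apply eqE_refl. destruct b2; try apply eqE_refl; destruct c; try apply eqE_refl.
  simpl. destruct (teq a b1); try apply eqE_refl. destruct (teq b2 c); try apply eqE_refl. subst. apply eqE_ax_check. Qed.

Lemma norm_eqE t : eqE t (norm t).
Proof.
  induction t; simpl; try (constructor; auto; fail); try (constructor; fail).
  - eapply eqE_trans. apply eqE_Dec; eauto. apply sdec_eqE.
  - eapply eqE_trans. apply eqE_Deca; eauto. apply sdeca_eqE.
  - eapply eqE_trans. apply eqE_Proj1; eauto. apply sproj1_eqE.
  - eapply eqE_trans. apply eqE_Proj2; eauto. apply sproj2_eqE.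
  - eapply eqE_trans. apply eqE_Check; eauto. apply scheck_eqE.
  - eapply eqE_trans. apply eqE_Retrieve; eauto. apply sretr_eqE.
Qed.

Lemma eqE_iff t u : eqE t u <-> norm t = norm u.
Proof.
  split. apply eqE_norm. intro H. eapply eqE_trans. apply norm_eqE.
  rewrite H. apply eqE_sym, norm_eqE.
Qed.

Definition mapc (f : term -> term) (t : term) : term :=
  match t with
  | Var x => Var x | Name n => Name n | Cst c => Cst c
  | Enc a b c => Enc (f a) (f b) (f c)
  | Dec a b => Dec (f a) (f b)
  | Enca a b c => Enca (f a) (f b) (f c)
  | Deca a b => Deca (f a) (f b)
  | Pub a => Pub (f a) | Priv a => Priv (f a)
  | Pair a b => Pair (f a) (f b)
  | Proj1 a => Proj1 (f a) | Proj2 a => Proj2 (f a)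
  | Sign a b => Sign (f a) (f b)
  | Check a b c => Check (f a) (f b) (f c)
  | Retrieve a => Retrieve (f a)
  end.

Fixpoint substf (f : nat -> term) (t : term) : term :=
  match t with
  | Var x => f x
  | Name n => Name n | Cst c => Cst c
  | Enc a b c => Enc (substf f a) (substf f b) (substf f c)
  | Dec a b => Dec (substf f a) (substf f b)
  | Enca a b c => Enca (substf f a) (substf f b) (substf f c)
  | Deca a b => Deca (substf f a) (substf f b)
  | Pub a => Pub (substf f a) | Priv a => Priv (substf f a)
  | Pair a b => Pair (substf f a) (substf f b)
  | Proj1 a => Proj1 (substf f a) | Proj2 a => Proj2 (substf f a)
  | Sign a b => Sign (substf f a) (substf f b)
  | Check a b c => Check (substf f a) (substf f b) (substf f c)
  | Retrieve a => Retrieve (substf f a)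
  end.

Definition isvar t := match t with Var _ => true | _ => false end.

Lemma subst1_nonvar s t : isvar t = false -> subst1 s t = mapc (subst1 s) t.
Proof. destruct t; simpl; congruence. Qed.

Lemma mapc_nonvar f t : isvar t = false -> isvar (mapc f t) = false.
Proof. destruct t; simpl; congruence. Qed.

Lemma mapc_mapc f g t : mapc f (mapc g t) = mapc (fun u => f (g u)) t.
Proof. destruct t; reflexivity. Qed.

Lemma mapc_id t : mapc (fun u => u) t = t.
Proof. destruct t; reflexivity. Qed.

Lemma iter_nonvar s k t : isvar t = false ->
  Nat.iter k (subst1 s) t = mapc (Nat.iter k (subst1 s)) t.
Proof.
  intro H. induction k.
  - destruct t; reflexivity.
  - simpl. rewrite IHk. rewrite subst1_nonvar by (apply mapc_nonvar; auto).
    rewrite mapc_mapc; reflexivity.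
Qed.

Definition theta (s : subst) (y : nat) : term := apply_subst s (Var y).

Lemma apply_substf s U : apply_subst s U = substf (theta s) U.
Proof.
  unfold apply_subst, theta.
  induction U; try reflexivity;
  rewrite iter_nonvar by reflexivity; simpl; congruence.
Qed.

Lemma lookup_none s x : lookup s x = None <-> ~ In x (dom s).
Proof.
  induction s as [|[y t] s IH]; simpl. tauto.
  destruct (Nat.eqb_spec x y); subst.
  - split; intro H; [discriminate|]. exfalso; tauto.
  - rewrite IH. split; intros H H'; apply H; [destruct H'; auto; congruence|auto].
Qed.

Lemma lookup_some_dom s x t : lookup s x = Some t -> In x (dom s).
Proof.
  intro H. destruct (in_dec Nat.eq_dec x (dom s)); auto.
  apply lookup_none in n. congruence.
Qed.

Lemma lookup_ran s x t : lookup s x = Some t -> In t (ran s).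
Proof.
  induction s as [|[y u] s IH]; simpl. discriminate.
  destruct (Nat.eqb x y); intro H. inversion H; auto. right; auto.
Qed.

Lemma subst1_closed s M : closed M -> subst1 s M = M.
Proof.
  unfold closed. induction M; simpl; intro H; try discriminate; try reflexivity;
  repeat match goal with H : _ ++ _ = [] |- _ => apply app_eq_nil in H; destruct H end;
  f_equal; auto.
Qed.

Definition repl_subst (s : nat) (M : term) (sg : subst) : subst :=
  map (fun p => (fst p, repl s M (snd p))) sg.

Lemma lookup_repl s M sg x :
  lookup (repl_subst s M sg) x = option_map (repl s M) (lookup sg x).
Proof.
  induction sg as [|[y t] sg IH]; simpl. reflexivity.
  destruct (Nat.eqb x y); auto.
Qed.

Lemma subst1_repl s M sg t : closed M ->
  subst1 (repl_subst s M sg) (repl s M t) = repl s M (subst1 sg t).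
Proof.
  intro HM. induction t; simpl; try (f_equal; auto; fail).
  - rewrite lookup_repl. destruct (lookup sg x); reflexivity.
  - destruct (Nat.eqb n s). apply subst1_closed; auto. reflexivity.
Qed.

Lemma iter_repl s M sg k t : closed M ->
  Nat.iter k (subst1 (repl_subst s M sg)) (repl s M t) = repl s M (Nat.iter k (subst1 sg) t).
Proof.
  intro HM. induction k; simpl. reflexivity. rewrite IHk. apply subst1_repl; auto.
Qed.

Lemma repl_notin s M t : ~ In s (names t) -> repl s M t = t.
Proof.
  induction t; simpl; intro H; try reflexivity;
  repeat rewrite in_app_iff in H;
  try (f_equal; tauto).
  destruct (Nat.eqb_spec n s); subst; tauto.
Qed.

Lemma apply_repl s M sg U : closed M -> ~ In s (names U) ->
  apply_subst (repl_subst s M sg) U = repl s M (apply_subst sg U).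
Proof.
  intros HM HU. unfold apply_subst. unfold repl_subst at 1. rewrite length_map.
  rewrite <- iter_repl by auto. rewrite repl_notin by auto. reflexivity.
Qed.

Lemma repl_eqE s M t u : eqE t u -> eqE (repl s M t) (repl s M u).
Proof.
  induction 1; simpl; try (econstructor; eauto; fail).
Qed.

Lemma vars_subst1 s w y : In y (vars (subst1 s w)) ->
  exists z, In z (vars w) /\
   ((exists u, lookup s z = Some u /\ In y (vars u)) \/ (lookup s z = None /\ y = z)).
Proof.
  induction w; simpl; intro H;
  repeat rewrite in_app_iff in *;
  try (destruct H as [H|[H|H]]; [destruct (IHw1 H) as [z Hz]|destruct (IHw2 H) as [z Hz]|destruct (IHw3 H) as [z Hz]];
       exists z; repeat rewrite in_app_iff; tauto);
  try (destruct H as [H|H]; [destruct (IHw1 H) as [z Hz]|destruct (IHw2 H) as [z Hz]];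
       exists z; repeat rewrite in_app_iff; tauto);
  try (destruct (IHw H) as [z Hz]; exists z; tauto);
  try contradiction.
  exists x. split; [left; auto|]. destruct (lookup s x) eqn:E.
  - left. exists t; auto.
  - right. simpl in H. destruct H; [auto|contradiction].
Qed.

Fixpoint chain (s : subst) (l : list nat) : Prop :=
  match l with
  | a :: l' => match l' with b :: _ => dep s a b /\ chain s l' | [] => True end
  | [] => True
  end.

Lemma chain_ct s a l : chain s (a :: l) -> forall b, In b l -> clos_trans nat (dep s) a b.
Proof.
  revert a. induction l as [|c l IH]; intros a H b Hb; simpl in Hb. contradiction.
  destruct H as [Hac Hc]. destruct Hb as [Hb|Hb].
  - subst. apply t_step; auto.
  - eapply t_trans. apply t_step, Hac. apply IH; auto.
Qed.

Lemma chain_tail s a l : chain s (a :: l) -> chain s l.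
Proof. destruct l; simpl; tauto. Qed.

Lemma chain_nodup s l : acyclic s -> chain s l -> NoDup l.
Proof.
  intro Hac. induction l as [|a l IH]; intro H. constructor.
  constructor.
  - intro Ha. apply (Hac a). eapply chain_ct; eauto.
  - apply IH. eapply chain_tail; eauto.
Qed.

Lemma chain_dom s a l : chain s (a :: l) -> In a (dom s) -> forall z, In z (a :: l) -> In z (dom s).
Proof.
  revert a. induction l as [|b l IH]; intros a H Ha z Hz.
  - destruct Hz as [Hz|Hz]; [subst; auto|contradiction].
  - destruct Hz as [Hz|Hz]; [subst; auto|].
    destruct H as [[Hd [t [Hl _]]] H]. apply (IH b H); auto.
    eapply lookup_some_dom; eauto.
Qed.

Lemma chain_len s a l : acyclic s -> chain s (a :: l) -> In a (dom s) -> length (a :: l) <= length s.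
Proof.
  intros Hac H Ha. replace (length s) with (length (dom s)) by (unfold dom; apply length_map).
  apply NoDup_incl_length. eapply chain_nodup; eauto.
  intros z Hz. eapply chain_dom; eauto.
Qed.

Lemma iter_chain s k : forall t y, In y (vars (Nat.iter k (subst1 s) t)) -> In y (dom s) ->
  exists l, length l = k /\ chain s (y :: l).
Proof.
  induction k; intros t y H Hy.
  - exists []. simpl; auto.
  - simpl in H. destruct (vars_subst1 _ _ _ H) as [z [Hz [[u [Hu Hyu]]|[Hn ->]]]].
    + assert (Hzd : In z (dom s)) by (eapply lookup_some_dom; eauto).
      destruct (IHk t z Hz Hzd) as [l [Hl Hc]].
      exists (z :: l). simpl. split. congruence. split; auto.
      split; auto. exists u; auto.
    + apply lookup_none in Hn. contradiction.
Qed.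

Lemma stab_nodom s t y : acyclic s -> In y (vars (Nat.iter (length s) (subst1 s) t)) -> ~ In y (dom s).
Proof.
  intros Hac H Hy. destruct (iter_chain s (length s) t y H Hy) as [l [Hl Hc]].
  pose proof (chain_len s y l Hac Hc Hy). simpl in H0. lia.
Qed.

Lemma subst1_nodom s u : (forall y, In y (vars u) -> lookup s y = None) -> subst1 s u = u.
Proof.
  induction u; simpl; intro H; try reflexivity;
  try (f_equal; [apply IHu1|apply IHu2|apply IHu3]; intros; apply H; repeat rewrite in_app_iff; tauto);
  try (f_equal; [apply IHu1|apply IHu2]; intros; apply H; repeat rewrite in_app_iff; tauto);
  try (f_equal; apply IHu; auto).
  rewrite H; auto.
Qed.

Lemma stab s t : acyclic s ->
  subst1 s (Nat.iter (length s) (subst1 s) t) = Nat.iter (length s) (subst1 s) t.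
Proof.
  intro Hac. apply subst1_nodom. intros y Hy. apply lookup_none. eapply stab_nodom; eauto.
Qed.

Lemma theta_unfold s x u : acyclic s -> lookup s x = Some u -> theta s x = substf (theta s) u.
Proof.
  intros Hac Hl. rewrite <- apply_substf. unfold theta, apply_subst.
  rewrite <- (stab s (Var x) Hac). rewrite <- Nat.iter_succ.
  rewrite Nat.iter_succ_r. simpl. rewrite Hl. reflexivity.
Qed.

Lemma theta_nodom s x : ~ In x (dom s) -> theta s x = Var x.
Proof.
  intro H. unfold theta, apply_subst. induction (length s); simpl. reflexivity.
  rewrite IHn. simpl. apply lookup_none in H. rewrite H. reflexivity.
Qed.

Lemma dep_wf_aux s : acyclic s -> forall m x l, chain s (x :: l) -> In x (dom s) ->
  length (x :: l) + m > length s -> Acc (fun y x => dep s y x) x.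
Proof.
  intro Hac. induction m; intros x l Hc Hx Hlen.
  - pose proof (chain_len s x l Hac Hc Hx). lia.
  - constructor. intros y Hy. apply (IHm y (x :: l)).
    + simpl. split; auto.
    + destruct Hy; auto.
    + simpl in *. lia.
Qed.

Lemma dep_wf s : acyclic s -> forall x, Acc (fun y x => dep s y x) x.
Proof.
  intros Hac x. constructor. intros y Hy.
  apply (dep_wf_aux s Hac (length s) y []); simpl; auto; try lia; destruct Hy; auto.
Qed.

Ltac rec_fin :=
  split; [split|split];
  [ let n := fresh "n" in let Hn := fresh "Hn" in intros n Hn; simpl in Hn;
    repeat rewrite in_app_iff in Hn; intuition eauto
  | simpl; repeat match goal with H : has_priv _ = false |- _ => rewrite H; clear H end; reflexivity
  | let n := fresh "n" in let Hn := fresh "Hn" in intros n Hn; simpl in Hn;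
    repeat rewrite in_app_iff in Hn; intuition eauto
  | rewrite apply_substf; simpl; repeat rewrite <- apply_substf; first [apply eqE_Enc|apply eqE_Dec|apply eqE_Enca|apply eqE_Deca|apply eqE_Pub|apply eqE_Pair|apply eqE_Proj1|apply eqE_Proj2|apply eqE_Sign|apply eqE_Check|apply eqE_Retrieve]; auto ].

Lemma recipe phi t : deducible phi t ->
  exists U, public phi U /\ (forall x, In x (vars U) -> In x (fdom phi)) /\
            eqE (apply_subst (fsubst phi) U) t.
Proof.
  unfold public, public_wrt.
  induction 1;
  repeat match goal with H : exists _, _ |- _ =>
    let U := fresh "U" in let P := fresh "P" in let Q := fresh "Q" in
    let V := fresh "V" in let E := fresh "E" in destruct H as [U [[P Q] [V E]]] end.
  - exists (Var x). simpl. split; [split; [tauto|reflexivity]|]. split; [intros y [->|[]]; auto|apply eqE_refl].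
  - exists (Name m). rewrite apply_substf. simpl. split; [split; [intros n [<-|[]]; auto|reflexivity]|]. split; [tauto|apply eqE_refl].
  - exists (Cst c). rewrite apply_substf. simpl. split; [split; [tauto|reflexivity]|]. split; [tauto|apply eqE_refl].
  - exists (Enc U1 U0 U); rec_fin.
  - exists (Dec U0 U); rec_fin.
  - exists (Enca U1 U0 U); rec_fin.
  - exists (Deca U0 U); rec_fin.
  - exists (Pub U); rec_fin.
  - exists (Pair U0 U); rec_fin.
  - exists (Proj1 U); rec_fin.
  - exists (Proj2 U); rec_fin.
  - exists (Sign U0 U); rec_fin.
  - exists (Check U1 U0 U); rec_fin.
  - exists (Retrieve U); rec_fin.
  - exists U. repeat split; auto. eapply eqE_trans; eauto.
Qed.

Lemma public_no_s phi s U : In s (fnames phi) -> public phi U -> ~ In s (names U).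
Proof. intros Hs [H _] Hn. apply (H s); auto. Qed.

Lemma frame_repl_subst phi s M : fsubst (frame_repl phi s M) = repl_subst s M (fsubst phi).
Proof. reflexivity. Qed.

Lemma fdom_repl phi s M : fdom (frame_repl phi s M) = fdom phi.
Proof. unfold fdom, dom, frame_repl. simpl. rewrite map_map. reflexivity. Qed.

Lemma direction_left phi s : In s (fnames phi) ->
  (forall M M' : term, closed M -> public phi M -> closed M' -> public phi M' ->
     stat_equiv (frame_repl phi s M) (frame_repl phi s M')) ->
  ~ deducible phi (Name s).
Proof.
  intros Hs H Hd. destruct (recipe _ _ Hd) as [U [HU [HV HE]]].
  assert (Hc : forall c, closed (Cst c) /\ public phi (Cst c)).
  { intro c. split. reflexivity. split. simpl; tauto. reflexivity. }
  destruct (H (Cst 0) (Cst 1)) as [_ H2]; try apply Hc.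
  assert (Hns := public_no_s phi s U Hs HU).
  specialize (H2 U (Cst 0) HU HU (proj2 (Hc 0)) (proj2 (Hc 0)) ltac:(rewrite fdom_repl; exact HV) ltac:(simpl; tauto)).
  unfold passes in H2. rewrite !frame_repl_subst in H2.
  rewrite !apply_repl in H2 by (reflexivity || simpl; tauto).
  rewrite (apply_substf _ (Cst 0)) in H2. simpl in H2.
  assert (A : forall c, eqE (repl s (Cst c) (apply_subst (fsubst phi) U)) (Cst c)).
  { intro c. apply (repl_eqE s (Cst c)) in HE. simpl in HE. rewrite Nat.eqb_refl in HE. exact HE. }
  assert (A0 := A 0).
  apply H2 in A0. clear H2. rename A0 into H2.
  assert (B : eqE (Cst 1) (Cst 0)). { eapply eqE_trans. apply eqE_sym, A. exact H2. }
  apply eqE_norm in B. discriminate.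
Qed.

Definition Rnd (sg : subst) (r : nat) : Prop :=
  exists U q m k, In U (ran sg) /\
    (subterm_at U q = Some (Enc m k (Name r)) \/ subterm_at U q = Some (Enca m k (Name r))).

Inductive G (sg : subst) (s : nat) : term -> Prop :=
| G_E U q m k r : In U (ran sg) -> subterm_at U q = Some (Enc m k (Name r)) -> r <> s ->
    G sg s (substf (theta sg) k) ->
    G sg s (Enc (substf (theta sg) m) (substf (theta sg) k) (Name r))
| G_Ea U q m k r : In U (ran sg) -> subterm_at U q = Some (Enca m k (Name r)) -> r <> s ->
    G sg s (substf (theta sg) k) ->
    G sg s (Enca (substf (theta sg) m) (substf (theta sg) k) (Name r))
| G_var x : G sg s (Var x)
| G_cst c : G sg s (Cst c)
| G_name n : n <> s -> ~ Rnd sg n -> G sg s (Name n)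
| G_enc a b c : G sg s a -> G sg s b -> G sg s c -> G sg s (Enc a b c)
| G_enca a b c : G sg s a -> G sg s b -> G sg s c -> G sg s (Enca a b c)
| G_pub a : G sg s a -> G sg s (Pub a)
| G_priv a : G sg s a -> G sg s (Priv a)
| G_pair a b : G sg s a -> G sg s b -> G sg s (Pair a b)
| G_sign a b : G sg s a -> G sg s b -> G sg s (Sign a b)
| G_dec a b : G sg s a -> G sg s b -> sdec a b = Dec a b -> G sg s (Dec a b)
| G_deca a b : G sg s a -> G sg s b -> sdeca a b = Deca a b -> G sg s (Deca a b)
| G_proj1 a : G sg s a -> sproj1 a = Proj1 a -> G sg s (Proj1 a)
| G_proj2 a : G sg s a -> sproj2 a = Proj2 a -> G sg s (Proj2 a)
| G_check a b c : G sg s a -> G sg s b -> G sg s c -> scheck a b c = Check a b c -> G sg s (Check a b c)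
| G_retr a : G sg s a -> sretr a = Retrieve a -> G sg s (Retrieve a).

Definition rnd_of (t : term) : option nat :=
  match t with Enc _ _ (Name r) | Enca _ _ (Name r) => Some r | _ => None end.

Definition Uniq (sg : subst) : Prop :=
  forall U q E U' q' E' r, In U (ran sg) -> In U' (ran sg) ->
    subterm_at U q = Some E -> subterm_at U' q' = Some E' ->
    rnd_of E = Some r -> rnd_of E' = Some r -> E = E'.

Fixpoint size (t : term) : nat :=
  match t with
  | Var _ | Name _ | Cst _ => 1
  | Enc a b c | Enca a b c | Check a b c => S (size a + size b + size c)
  | Dec a b | Deca a b | Pair a b | Sign a b => S (size a + size b)
  | Pub a | Priv a | Proj1 a | Proj2 a | Retrieve a => S (size a)
  end.

Lemma size_pos t : 1 <= size t.
Proof. destruct t; simpl; lia. Qed.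

Definition replN s M t := norm (repl s M t).

Section Inj.
Variable sg : subst.
Variable s : nat.
Variable M : term.
Hypothesis HU : Uniq sg.

Lemma G_enc_inv a1 a2 a3 : G sg s (Enc a1 a2 a3) -> G sg s a2 /\
  ((G sg s a1 /\ G sg s a3) \/
   exists U q m k r, a3 = Name r /\ r <> s /\ In U (ran sg) /\ subterm_at U q = Some (Enc m k (Name r)) /\
      a1 = substf (theta sg) m /\ a2 = substf (theta sg) k).
Proof.
  intro H; inversion H; subst.
  - split; auto. right. do 5 eexists; repeat split; eauto.
  - tauto.
Qed.

Lemma G_enca_inv a1 a2 a3 : G sg s (Enca a1 a2 a3) -> G sg s a2 /\
  ((G sg s a1 /\ G sg s a3) \/
   exists U q m k r, a3 = Name r /\ r <> s /\ In U (ran sg) /\ subterm_at U q = Some (Enca m k (Name r)) /\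
      a1 = substf (theta sg) m /\ a2 = substf (theta sg) k).
Proof.
  intro H; inversion H; subst.
  - split; auto. right. do 5 eexists; repeat split; eauto.
  - tauto.
Qed.

Lemma G_name_inv n : G sg s (Name n) -> n <> s /\ ~ Rnd sg n.
Proof. intro H; inversion H; auto. Qed.

Lemma size_neq_sub1 f a (P : size a < size f) : a <> f.
Proof. intro; subst; lia. Qed.

Lemma mapc_name f t n : mapc f t = Name n -> t = Name n.
Proof. destruct t; simpl; congruence. Qed.

Lemma main_ind n :
  (forall t, size t <= n -> G sg s t -> replN s M t = mapc (replN s M) t) /\
  (forall a b, size a + size b <= n -> G sg s a -> G sg s b -> replN s M a = replN s M b -> a = b).
Proof.
  induction n as [|n [IHs IHi]].
  - split; [intros t Ht|intros a b Hab]; [pose proof (size_pos t)|pose proof (size_pos a)]; lia.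
  - assert (Hs : forall t, size t <= S n -> G sg s t -> replN s M t = mapc (replN s M) t).
    { intros t Hsz Gt. inversion Gt; subst; try reflexivity.
      + unfold replN. simpl. destruct (Nat.eqb_spec n0 s); [congruence|reflexivity].
      + unfold replN at 1. simpl. fold (replN s M a) (replN s M b). simpl in Hsz.
        rewrite (IHs a) by (auto; lia).
        destruct a; simpl; try reflexivity.
        destruct (teq (replN s M a2) (replN s M b)) as [E|E]; [|reflexivity].
        apply G_enc_inv in H. destruct H as [Ga2 _].
        simpl in Hsz. apply IHi in E; auto; [|lia]. subst.
        simpl in H1. destruct (teq b b); [|congruence].
        exfalso. apply (f_equal size) in H1. simpl in H1. lia.
      + unfold replN at 1. simpl. fold (replN s M a) (replN s M b). simpl in Hsz.
        rewrite (IHs a) by (auto; lia). rewrite (IHs b) by (auto; lia).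
        destruct a; simpl; try reflexivity.
        apply G_enca_inv in H. destruct H as [Ga2 _].
        rewrite (IHs a2) by (auto; simpl in Hsz; lia).
        destruct a2; simpl; try reflexivity.
        destruct b; simpl; try reflexivity.
        destruct (teq (replN s M a2) (replN s M b)) as [E|E]; [|reflexivity].
        inversion Ga2; subst. inversion H0; subst.
        simpl in Hsz. apply IHi in E; auto; [|lia]. subst.
        simpl in H1. destruct (teq b b); [|congruence].
        exfalso. apply (f_equal size) in H1. simpl in H1. lia.
      + unfold replN at 1. simpl. fold (replN s M a). simpl in Hsz.
        rewrite (IHs a) by (auto; lia).
        destruct a; simpl; try reflexivity.
        exfalso. simpl in H0. apply (f_equal size) in H0. simpl in H0. lia.
      + unfold replN at 1. simpl. fold (replN s M a). simpl in Hsz.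
        rewrite (IHs a) by (auto; lia).
        destruct a; simpl; try reflexivity.
        exfalso. simpl in H0. apply (f_equal size) in H0. simpl in H0. lia.
      + unfold replN at 1. simpl. fold (replN s M a) (replN s M b) (replN s M c). simpl in Hsz.
        rewrite (IHs b) by (auto; lia). rewrite (IHs c) by (auto; lia).
        destruct b; simpl; try reflexivity.
        inversion H0; subst. simpl in Hsz.
        rewrite (IHs b2) by (auto; lia).
        destruct b2; simpl; try reflexivity.
        destruct c; simpl; try reflexivity.
        destruct (teq (replN s M a) (replN s M b1)) as [E1|E1]; [|reflexivity].
        destruct (teq (replN s M b2) (replN s M c)) as [E2|E2]; [|reflexivity].
        inversion H6; subst. inversion H1; subst. simpl in Hsz.
        apply IHi in E1; auto; [|lia]. apply IHi in E2; auto; [|lia]. subst.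
        simpl in H2. destruct (teq b1 b1); [|congruence]. destruct (teq c c); [|congruence].
        discriminate.
      + unfold replN at 1. simpl. fold (replN s M a). simpl in Hsz.
        rewrite (IHs a) by (auto; lia).
        destruct a; simpl; try reflexivity.
        exfalso. simpl in H0. apply (f_equal size) in H0. simpl in H0. lia. }
    split; [exact Hs|].
    intros a b Hsz Ga Gb E.
    assert (Ha := Hs a ltac:(pose proof (size_pos b); lia) Ga).
    assert (Hb := Hs b ltac:(pose proof (size_pos a); lia) Gb).
    rewrite Ha, Hb in E. clear Ha Hb.
    destruct a; destruct b; simpl in E; try discriminate; simpl in Hsz;
    injection E; intros; subst; try reflexivity.
    all: try (inversion Ga; subst; inversion Gb; subst; f_equal; (apply IHi; [lia|assumption|assumption|assumption]); fail).
    + apply G_enc_inv in Ga, Gb.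
      destruct Ga as [Ga2 [[Ga1 Ga3]|(U&q&m&k&r&->&Hr&HUin&Hsub&->&->)]];
      destruct Gb as [Gb2 [[Gb1 Gb3]|(U'&q'&m'&k'&r'&->&Hr'&HUin'&Hsub'&->&->)]].
      * f_equal; apply IHi; [lia|auto|auto|auto| lia|auto|auto|auto| lia|auto|auto|auto].
      * exfalso. assert (Hn : replN s M a3 = Name r').
        { rewrite H. unfold replN. simpl. destruct (Nat.eqb_spec r' s); [congruence|reflexivity]. }
        rewrite IHs in Hn by (auto; lia). apply mapc_name in Hn. subst.
        apply G_name_inv in Ga3. apply (proj2 Ga3). exists U', q', m', k'. auto.
      * exfalso. assert (Hn : replN s M b3 = Name r).
        { rewrite <- H. unfold replN. simpl. destruct (Nat.eqb_spec r s); [congruence|reflexivity]. }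
        rewrite IHs in Hn by (auto; lia). apply mapc_name in Hn. subst.
        apply G_name_inv in Gb3. apply (proj2 Gb3). exists U, q, m, k. auto.
      * assert (r = r').
        { unfold replN in H; simpl in H. destruct (Nat.eqb_spec r s); [congruence|]. destruct (Nat.eqb_spec r' s); [congruence|]. simpl in H. congruence. }
        subst r'. assert (Enc m k (Name r) = Enc m' k' (Name r)) by (apply (HU U q _ U' q' _ r HUin HUin' Hsub Hsub'); reflexivity).
        congruence.
    + apply G_enca_inv in Ga, Gb.
      destruct Ga as [Ga2 [[Ga1 Ga3]|(U&q&m&k&r&->&Hr&HUin&Hsub&->&->)]];
      destruct Gb as [Gb2 [[Gb1 Gb3]|(U'&q'&m'&k'&r'&->&Hr'&HUin'&Hsub'&->&->)]].
      * f_equal; apply IHi; [lia|auto|auto|auto| lia|auto|auto|auto| lia|auto|auto|auto].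
      * exfalso. assert (Hn : replN s M a3 = Name r').
        { rewrite H. unfold replN. simpl. destruct (Nat.eqb_spec r' s); [congruence|reflexivity]. }
        rewrite IHs in Hn by (auto; lia). apply mapc_name in Hn. subst.
        apply G_name_inv in Ga3. apply (proj2 Ga3). exists U', q', m', k'. auto.
      * exfalso. assert (Hn : replN s M b3 = Name r).
        { rewrite <- H. unfold replN. simpl. destruct (Nat.eqb_spec r s); [congruence|reflexivity]. }
        rewrite IHs in Hn by (auto; lia). apply mapc_name in Hn. subst.
        apply G_name_inv in Gb3. apply (proj2 Gb3). exists U, q, m, k. auto.
      * assert (r = r').
        { unfold replN in H; simpl in H. destruct (Nat.eqb_spec r s); [congruence|]. destruct (Nat.eqb_spec r' s); [congruence|]. simpl in H. congruence. }
        subst r'. assert (Enca m k (Name r) = Enca m' k' (Name r)) by (apply (HU U q _ U' q' _ r HUin HUin' Hsub Hsub'); reflexivity).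
        congruence.
Qed.
End Inj.

Lemma sub_app t p q : subterm_at t (p ++ q) =
  match subterm_at t p with Some u => subterm_at u q | None => None end.
Proof.
  revert t. induction p as [|i p IH]; intro t; simpl. reflexivity.
  destruct i. reflexivity. destruct (nth_error (args t) i); auto.
Qed.

Lemma pub_args fn t : public_wrt fn t -> forall u, In u (args t) -> public_wrt fn u.
Proof.
  intros [H1 H2] u Hu. split.
  - intros n Hn. apply H1. destruct t; simpl in *; repeat rewrite in_app_iff;
    repeat (destruct Hu as [<-|Hu]; [tauto|]); contradiction.
  - destruct t; simpl in *; repeat rewrite Bool.orb_false_iff in H2;
    repeat (destruct Hu as [<-|Hu]; [tauto|]); try contradiction; try discriminate.
Qed.

Lemma vars_args t : forall u, In u (args t) -> forall x, In x (vars u) -> In x (vars t).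
Proof.
  intros u Hu x Hx. destruct t; simpl in *; repeat rewrite in_app_iff;
  repeat (destruct Hu as [<-|Hu]; [tauto|]); contradiction.
Qed.

Lemma names_args t : forall u, In u (args t) -> forall x, In x (names u) -> In x (names t).
Proof.
  intros u Hu x Hx. destruct t; simpl in *; repeat rewrite in_app_iff;
  repeat (destruct Hu as [<-|Hu]; [tauto|]); contradiction.
Qed.

Fixpoint nodestr (t : term) : bool :=
  match t with
  | Var _ | Name _ | Cst _ => true
  | Enc a b c | Enca a b c => nodestr a && nodestr b && nodestr c
  | Pub a | Priv a => nodestr a
  | Pair a b | Sign a b => nodestr a && nodestr b
  | _ => false
  end.

Lemma nodestr_norm t : nodestr t = true -> norm t = t.
Proof.
  induction t; simpl; intro H; repeat rewrite Bool.andb_true_iff in H; try discriminate;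
  f_equal; tauto.
Qed.

Lemma nodestr_of_sub t : (forall p u, subterm_at t p = Some u -> ~ is_destructor u) -> nodestr t = true.
Proof.
  induction t; intro H; simpl; auto;
  try (exfalso; apply (H [] _ eq_refl); simpl; auto; fail);
  repeat rewrite Bool.andb_true_iff; repeat split;
  first [apply IHt1 | apply IHt2 | apply IHt3 | apply IHt];
  intros p u Hp; first [solve [apply (H (1 :: p)); simpl; auto] | solve [apply (H (2 :: p)); simpl; auto] | solve [apply (H (3 :: p)); simpl; auto]].
Qed.

Lemma nodestr_subst1 sg t : (forall u, In u (ran sg) -> nodestr u = true) ->
  nodestr t = true -> nodestr (subst1 sg t) = true.
Proof.
  intros Hr. induction t; simpl; intro H; repeat rewrite Bool.andb_true_iff in *; try tauto.
  destruct (lookup sg x) eqn:E; auto. eapply Hr, lookup_ran; eauto.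
Qed.

Lemma nodestr_iter sg k t : (forall u, In u (ran sg) -> nodestr u = true) ->
  nodestr t = true -> nodestr (Nat.iter k (subst1 sg) t) = true.
Proof.
  intros Hr Ht. induction k; simpl; auto. apply nodestr_subst1; auto.
Qed.

Lemma sdec_cases a b : sdec a b = Dec a b \/ exists x z, a = Enc x b z /\ sdec a b = x.
Proof.
  destruct a; simpl; auto. destruct (teq a2 b); subst; eauto.
Qed.

Lemma sdeca_cases a b : sdeca a b = Deca a b \/ exists x z w, a = Enca x (Pub w) z /\ b = Priv w /\ sdeca a b = x.
Proof.
  destruct a; simpl; auto. destruct a2; auto. destruct b; auto.
  destruct (teq a2 b); subst; eauto 7.
Qed.

Lemma sproj1_cases a : sproj1 a = Proj1 a \/ exists x y, a = Pair x y /\ sproj1 a = x.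
Proof. destruct a; simpl; eauto. Qed.
Lemma sproj2_cases a : sproj2 a = Proj2 a \/ exists x y, a = Pair x y /\ sproj2 a = y.
Proof. destruct a; simpl; eauto. Qed.
Lemma sretr_cases a : sretr a = Retrieve a \/ exists x y, a = Sign x y /\ sretr a = x.
Proof. destruct a; simpl; eauto. Qed.
Lemma scheck_cases a b c : scheck a b c = Check a b c \/ scheck a b c = ok.
Proof.
  destruct b; simpl; auto. destruct b2; auto. destruct c; auto.
  destruct (teq a b1); auto. destruct (teq b2 c); auto.
Qed.

Section Frame.
Variable phi : frame.
Variable s : nat.
Hypothesis Hac : acyclic (fsubst phi).
Hypothesis Hs : In s (fnames phi).
Hypothesis Hwf : well_formed phi s.

Let sg := fsubst phi.
Let th := theta (fsubst phi).

Lemma wf_uniq : Uniq sg.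
Proof.
  intros U q E U' q' E' r HU HU' Hq Hq' Hr Hr'.
  destruct Hwf as [H1 _].
  assert (Henc : is_encryption E) by (destruct E; simpl in Hr; try discriminate; exact I).
  destruct (H1 U q E HU Hq Henc) as [_ Hprob].
  assert (HE3 : forall F q0 U0, subterm_at U0 q0 = Some F -> rnd_of F = Some r -> subterm_at U0 (q0 ++ [3]) = Some (Name r)).
  { intros F q0 U0 HF HrF. rewrite sub_app, HF.
    destruct F; simpl in HrF; try discriminate; destruct F3; try discriminate; inversion HrF; reflexivity. }
  destruct (Hprob (Name r) E (HE3 E q U Hq Hr) Hq U' (q' ++ [3]) HU' (HE3 E' q' U' Hq' Hr'))
    as [q'' [Heq Hsub]].
  apply app_inj_tail in Heq. destruct Heq as [-> _]. congruence.
Qed.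

Lemma rnd_fn r : Rnd sg r -> In r (fnames phi) /\ r <> s.
Proof.
  intros (U & q & m & k & HU & Hq). destruct Hwf as [H1 _].
  assert (exists E, subterm_at U q = Some E /\ is_encryption E /\ subterm_at E [3] = Some (Name r)) as [E [HE [Hen HE3]]].
  { destruct Hq as [Hq|Hq]; eexists; split; eauto; simpl; auto. }
  destruct (H1 U q E HU HE Hen) as [[r' [Hr' Hin]] _].
  rewrite sub_app, HE, HE3 in Hr'. inversion Hr'; subst.
  apply in_remove in Hin. tauto.
Qed.

Lemma attacker_ded U : public phi U -> (forall x, In x (vars U) -> In x (fdom phi)) ->
  deducible phi (substf th U).
Proof.
  intros HP HV. induction U; simpl.
  all: try (destruct HP as [_ HP]; simpl in HP; discriminate).
  all: try (constructor;
    match goal with IH : public phi ?u -> _ -> deducible _ _ |- deducible _ (substf _ ?u) =>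
      apply IH; [apply (pub_args _ _ HP); simpl; tauto | intros y Hy; apply HV; eapply vars_args; [|eauto]; simpl; tauto] end; fail).
  - apply (ded_var phi x). apply HV; simpl; auto.
  - apply ded_name. destruct HP as [HP _]. apply HP. simpl; auto.
Qed.

Lemma th_nodestr x : nodestr (th x) = true.
Proof.
  unfold th, theta, apply_subst. apply nodestr_iter; auto.
  intros u Hu. apply nodestr_of_sub. intros p v Hp.
  destruct Hwf as [_ [_ H3]]. apply (H3 u v Hu). exists p; auto.
Qed.

Hypothesis Hnd : ~ deducible phi (Name s).

Lemma no_third_child U p : (forall q, p = q ++ [3] -> forall E, subterm_at U q = Some E -> ~ is_encryption E) ->
  forall i, i <> 3 -> (forall q, p ++ [i] = q ++ [3] -> forall E, subterm_at U q = Some E -> ~ is_encryption E).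
Proof.
  intros _ i Hi q Hq. apply app_inj_tail in Hq. destruct Hq as [_ Hq]. congruence.
Qed.

Ltac ih_child IH U p Hp Hvars i :=
  apply (IH U (p ++ [i])); [assumption | rewrite sub_app, Hp; reflexivity | apply no_third_child; auto; lia
    | | intros y Hy; apply Hvars; repeat rewrite in_app_iff; auto].

Lemma gen_G V : forall U p, In U (ran sg) -> subterm_at U p = Some V ->
  (forall q, p = q ++ [3] -> forall E, subterm_at U q = Some E -> ~ is_encryption E) ->
  (deducible phi (substf th V) \/ ~ In s (names V)) ->
  (forall y, In y (vars V) -> In y (dom sg) -> G sg s (th y)) ->
  G sg s (substf th V).
Proof.
  destruct Hwf as [H1 [H2 H3]].
  induction V; intros U p HU Hp Hthird Hmode Hvars; simpl in *;
  try (exfalso; eapply (H3 U); [exact HU| exists p; exact Hp | exact I]).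
  -
    destruct (in_dec Nat.eq_dec x (dom sg)) as [Hx|Hx].
    + apply Hvars; auto.
    + unfold th. rewrite theta_nodom by exact Hx. apply G_var.
  -
    destruct (Nat.eq_dec n s) as [->|Hns].
    + exfalso. destruct Hmode as [Hm|Hm]; [exact (Hnd Hm)|apply Hm; left; auto].
    + apply G_name; auto. intros (U' & q' & m & k & HU' & Hq').
      assert (exists E, subterm_at U' q' = Some E /\ is_encryption E /\ subterm_at E [3] = Some (Name n)) as [E [HE [Hen HE3]]].
      { destruct Hq' as [Hq'|Hq']; eexists; split; eauto; simpl; auto. }
      destruct (H1 U' q' E HU' HE Hen) as [_ Hprob].
      assert (HR : subterm_at U' (q' ++ [3]) = Some (Name n)) by (rewrite sub_app, HE; exact HE3).
      destruct (Hprob (Name n) E HR HE U p HU Hp) as [q'' [-> Hq'']].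
      apply (Hthird q'' eq_refl E Hq'' Hen).
  - apply G_cst.
  -
    destruct (H1 U p (Enc V1 V2 V3) HU Hp I) as [[r [Hr Hin]] _].
    rewrite sub_app, Hp in Hr. simpl in Hr. inversion Hr; subst V3. simpl.
    apply in_remove in Hin.
    assert (Hk : key_condition s (Enc V1 V2 (Name r))) by (apply (H2 U); auto; exists p; auto).
    simpl in Hk.
    apply (G_E sg s U p V1 V2 r HU Hp (proj2 Hin)).
    ih_child IHV2 U p Hp Hvars 2. right; tauto.
  -
    destruct (H1 U p (Enca V1 V2 V3) HU Hp I) as [[r [Hr Hin]] _].
    rewrite sub_app, Hp in Hr. simpl in Hr. inversion Hr; subst V3. simpl.
    apply in_remove in Hin.
    assert (Hk : key_condition s (Enca V1 V2 (Name r))) by (apply (H2 U); auto; exists p; auto).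
    simpl in Hk.
    apply (G_Ea sg s U p V1 V2 r HU Hp (proj2 Hin)).
    ih_child IHV2 U p Hp Hvars 2. right; tauto.
  -
    assert (Hk : key_condition s (Pub V)) by (apply (H2 U); auto; exists p; auto). simpl in Hk.
    apply G_pub. ih_child IHV U p Hp Hvars 1. right; tauto.
  -
    assert (Hk : key_condition s (Priv V)) by (apply (H2 U); auto; exists p; auto). simpl in Hk.
    apply G_priv. ih_child IHV U p Hp Hvars 1. right; tauto.
  -
    apply G_pair.
    + ih_child IHV1 U p Hp Hvars 1.
      destruct Hmode as [Hm|Hm]; [left|right].
      * eapply ded_eq. apply ded_Proj1, Hm. apply eqE_ax_proj1.
      * rewrite in_app_iff in Hm; tauto.
    + ih_child IHV2 U p Hp Hvars 2.
      destruct Hmode as [Hm|Hm]; [left|right].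
      * eapply ded_eq. apply ded_Proj2, Hm. apply eqE_ax_proj2.
      * rewrite in_app_iff in Hm; tauto.
  -
    assert (Hk : key_condition s (Sign V1 V2)) by (apply (H2 U); auto; exists p; auto). simpl in Hk.
    apply G_sign.
    + ih_child IHV1 U p Hp Hvars 1.
      destruct Hmode as [Hm|Hm]; [left|right].
      * eapply ded_eq. apply ded_Retrieve, Hm. apply eqE_ax_retrieve.
      * rewrite in_app_iff in Hm; tauto.
    + ih_child IHV2 U p Hp Hvars 2. right; tauto.
Qed.

Lemma th_G x : In x (dom sg) -> G sg s (th x).
Proof.
  induction (dep_wf _ Hac x) as [x _ IH]. intro Hx.
  destruct (lookup sg x) as [u|] eqn:Hl; [|apply lookup_none in Hl; contradiction].
  assert (Hth : th x = substf th u) by (unfold th; apply theta_unfold; auto).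
  rewrite Hth. apply (gen_G u u []); auto.
  - eapply lookup_ran; eauto.
  - intros q Hq. destruct q; discriminate.
  - left. rewrite <- Hth. apply ded_var. exact Hx.
  - intros y Hy Hyd. apply IH; auto. split; auto. exists u; auto.
Qed.

Lemma msg_G U q E m : In U (ran sg) -> subterm_at U q = Some E -> subterm_at E [1] = Some m ->
  deducible phi (substf th m) -> G sg s (substf th m).
Proof.
  intros HU Hq HE Hd. apply (gen_G m U (q ++ [1])); auto.
  - rewrite sub_app, Hq. exact HE.
  - intros q' Hq'. apply app_inj_tail in Hq'. destruct Hq'; discriminate.
  - intros y _ Hy. apply th_G; auto.
Qed.

Ltac sih HP HV :=
  match goal with IH : public phi ?u -> _ -> _ -> G _ _ (norm (substf _ ?u)) |- G _ _ (norm (substf _ ?u)) =>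
      apply IH; [apply (pub_args _ _ HP); simpl; tauto
                |intros y Hy; apply HV; eapply vars_args; [|eauto]; simpl; tauto
                |apply attacker_ded; [apply (pub_args _ _ HP); simpl; tauto|intros y Hy; apply HV; eapply vars_args; [|eauto]; simpl; tauto]] end.

Lemma attacker_G U : public phi U -> (forall x, In x (vars U) -> In x (fdom phi)) ->
  G sg s (norm (substf th U)).
Proof.
  intros HP HV. assert (HD := attacker_ded U HP HV).
  induction U.
  all: try (destruct HP as [_ HP]; simpl in HP; discriminate).
  - simpl. rewrite nodestr_norm by apply th_nodestr. apply th_G. apply HV. simpl; auto.
  - simpl. destruct HP as [HP _]. assert (Hn : ~ In n (fnames phi)) by (apply HP; simpl; auto).
    apply G_name. intros ->; contradiction. intro HR. apply rnd_fn in HR. tauto.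
  - apply G_cst.
  - simpl. apply G_enc; sih HP HV.
  - assert (G1 : G sg s (norm (substf th U1))) by sih HP HV.
    assert (G2 : G sg s (norm (substf th U2))) by sih HP HV.
    assert (Hded := ded_eq _ _ _ HD (norm_eqE _)).
    simpl in *. destruct (sdec_cases (norm (substf th U1)) (norm (substf th U2))) as [E|(x&z&E1&E2)].
    + rewrite E. apply G_dec; auto.
    + rewrite E2 in *. rewrite E1 in G1. apply G_enc_inv in G1.
      destruct G1 as [_ [[Gx _]|(U'&q&m&k&r&->&Hr&HU'&Hq&->&_)]]; auto.
      eapply msg_G; eauto; reflexivity.
  - simpl. apply G_enca; sih HP HV.
  - assert (G1 : G sg s (norm (substf th U1))) by sih HP HV.
    assert (G2 : G sg s (norm (substf th U2))) by sih HP HV.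
    assert (Hded := ded_eq _ _ _ HD (norm_eqE _)).
    simpl in *. destruct (sdeca_cases (norm (substf th U1)) (norm (substf th U2))) as [E|(x&z&w&E1&E3&E2)].
    + rewrite E. apply G_deca; auto.
    + rewrite E2 in *. rewrite E1 in G1. apply G_enca_inv in G1.
      destruct G1 as [_ [[Gx _]|(U'&q&m&k&r&->&Hr&HU'&Hq&->&_)]]; auto.
      eapply msg_G; eauto; reflexivity.
  - simpl. apply G_pub; sih HP HV.
  - simpl. apply G_pair; sih HP HV.
  - assert (G1 : G sg s (norm (substf th U))) by sih HP HV.
    simpl in *. destruct (sproj1_cases (norm (substf th U))) as [E|(x&y&E1&E2)].
    + rewrite E. apply G_proj1; auto.
    + rewrite E2. rewrite E1 in G1. inversion G1; auto.
  - assert (G1 : G sg s (norm (substf th U))) by sih HP HV.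
    simpl in *. destruct (sproj2_cases (norm (substf th U))) as [E|(x&y&E1&E2)].
    + rewrite E. apply G_proj2; auto.
    + rewrite E2. rewrite E1 in G1. inversion G1; auto.
  - simpl. apply G_sign; sih HP HV.
  - assert (G1 : G sg s (norm (substf th U1))) by sih HP HV.
    assert (G2 : G sg s (norm (substf th U2))) by sih HP HV.
    assert (G3 : G sg s (norm (substf th U3))) by sih HP HV.
    simpl in *. destruct (scheck_cases (norm (substf th U1)) (norm (substf th U2)) (norm (substf th U3))) as [E|E];
    rewrite E. apply G_check; auto. apply G_cst.
  - assert (G1 : G sg s (norm (substf th U))) by sih HP HV.
    simpl in *. destruct (sretr_cases (norm (substf th U))) as [E|(x&y&E1&E2)].
    + rewrite E. apply G_retr; auto.
    + rewrite E2. rewrite E1 in G1. inversion G1; auto.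
Qed.

End Frame.

Lemma passes_repl phi s M : acyclic (fsubst phi) -> In s (fnames phi) -> well_formed phi s ->
  ~ deducible phi (Name s) -> closed M ->
  forall U V, public phi U -> public phi V ->
  (forall x, In x (vars U) -> In x (fdom phi)) ->
  (forall x, In x (vars V) -> In x (fdom phi)) ->
  (passes (frame_repl phi s M) U V <-> passes phi U V).
Proof.
  intros Hac Hs Hwf Hnd HM U V HPU HPV HVU HVV. unfold passes.
  rewrite frame_repl_subst.
  rewrite !apply_repl by (auto; eapply public_no_s; eauto).
  split; [|apply repl_eqE].
  intro H. apply eqE_iff.
  assert (GU := attacker_G phi s Hac Hs Hwf Hnd U HPU HVU).
  assert (GV := attacker_G phi s Hac Hs Hwf Hnd V HPV HVV).
  rewrite <- !apply_substf in GU, GV.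
  set (a := norm (apply_subst (fsubst phi) U)) in *.
  set (b := norm (apply_subst (fsubst phi) V)) in *.
  apply (proj2 (main_ind (fsubst phi) s M (wf_uniq phi s Hwf) (size a + size b)) a b (le_n _) GU GV).
  unfold replN, a, b.
  rewrite <- (eqE_norm _ _ (repl_eqE s M _ _ (norm_eqE (apply_subst (fsubst phi) U)))).
  rewrite <- (eqE_norm _ _ (repl_eqE s M _ _ (norm_eqE (apply_subst (fsubst phi) V)))).
  apply eqE_norm; exact H.
Qed.

Theorem theorem2p6 (phi : frame) (s : nat) :
  frame_ok phi ->
  In s (fnames phi) ->
  well_formed phi s ->
  (~ deducible phi (Name s) <->
   forall M M' : term,
     closed M -> public phi M -> closed M' -> public phi M' ->
     stat_equiv (frame_repl phi s M) (frame_repl phi s M')).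
Proof.
  intros [_ Hac] Hs Hwf. split.
  - intros Hnd M M' HM _ HM' _. split.
    + intro x. rewrite !fdom_repl. tauto.
    + intros U V HU _ HV _ HVU HVV. rewrite fdom_repl in HVU, HVV.
      rewrite (passes_repl phi s M), (passes_repl phi s M'); auto; tauto.
  - apply direction_left; auto.
Qed.
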